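(* Let $n\ge3$, $1\le k\le n$, $c_0>0$, and let $u\in C^2(\overline{\mathbb{R}^n_+})$ be positive with $\sigma_k(A^u)=2^k\binom nk$, $g_u\in\Gamma_k^+$ in $\overline{\mathbb{R}^n_+}$, $\mathcal{B}_k^{g_u}=c_0$ on $\partial\mathbb{R}^n_+$, and assume $u_{0,1}(x):=|x|^{2-n}u(x/|x|^2)$ extends to a positive function in $C^2(\overline{B_1^+})$. Then $\bar\lambda(x)<\infty$ for every $x\in\partial\mathbb{R}^n_+$.
   Context: $B_1^+=B_1\cap\mathbb{R}^n_+$. For $x\in\partial\mathbb{R}^n_+$, $\lambda>0$: $u_{x,\lambda}(y):=\big(\frac{\lambda}{|y-x|}\big)^{n-2}u\big(x+\frac{\lambda^2(y-x)}{|y-x|^2}\big)$, and $\bar\lambda(x):=\sup\{\mu>0: u_{x,\lambda}\le u \text{ in } \overline{\mathbb{R}^n_+}\setminus B_\lambda(x)\ \forall\,0<\lambda<\mu\}$. For positive $C^2$ $u$: $g_u=u^{4/(n-2)}|dx|^2$, $A^u=-\frac{2}{n-2}u^{-\frac{n+2}{n-2}}\nabla^2u+\frac{2n}{(n-2)^2}u^{-\frac{2n}{n-2}}\nabla u\otimes\nabla u-\frac{2}{(n-2)^2}u^{-\frac{2n}{n-2}}|\nabla u|^2I_n$; $\sigma_s$ is the $s$-th elementary symmetric function of eigenvalues; $\Gamma_k^+=\{\lambda:\sigma_1(\lambda)>0,\dots,\sigma_k(\lambda)>0\}$, $g_u\in\Gamma_k^+$ meaning eigenvalues of $A^u$ in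 $\Gamma_k^+$. On $\partial\mathbb{R}^n_+$: $h_{g_u}=-\frac{2}{n-2}u^{-\frac n{n-2}}\partial_{x_n}u$, $A^{\mathrm T}_{g_u}=((A^u)_{\alpha\beta})_{1\le\alpha,\beta\le n-1}$, $\mathcal{B}_k^{g_u}=\frac{(n-1)!}{(n-k)!(2k-1)!!}h_{g_u}^{2k-1}+\sum_{s=1}^{k-1}\frac{(n-1-s)!}{(n-k)!(2k-2s-1)!!}\sigma_s(A^{\mathrm T}_{g_u})h_{g_u}^{2k-2s-1}$. *)

(* Defs.v *)
From HB Require Import structures.
From mathcomp Require Import all_boot all_order all_algebra.
From mathcomp Require Import all_classical all_reals all_analysis.
Set Implicit Arguments. Unset Strict Implicit. Unset Printing Implicit Defensive.
Import Order.TTheory GRing.Theory Num.Theory.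
Import numFieldNormedType.Exports.
Local Open Scope ring_scope.
Local Open Scope classical_set_scope.

(* sigma_s of the eigenvalues of a square matrix M of size m:
   if char_poly M = \prod_i ('X - lambda_i) then sigma_s(lambda) is, by Vieta,
   (-1)^s times the coefficient of 'X^(m-s) of char_poly M. *)
Definition msigma (R : realType) (m s : nat) (M : 'M[R]_m) : R :=
  (-1) ^+ s * (char_poly M)`_(m - s).

Definition in_Gamma (R : realType) (m k : nat) (M : 'M[R]_m) : Prop :=
  forall j : nat, (1 <= j <= k)%N -> 0 < msigma j M.

(* odd double factorial : dfo m = (2m-1)!! = 1 * 3 * ... * (2m-1) *)
Definition dfo (m : nat) : nat := \prod_(i < m) (2 * i + 1).

Section Defs.
Variables (R : realType) (n : nat).
Local Notation pt := 'rV[R]_n.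

(* j-th coordinate (0-based) of a point; 0 if j >= n *)
Definition coord (x : pt) (j : nat) : R :=
  odflt 0 (omap (fun i : 'I_n => x 0 i) (insub j)).

Definition xn (x : pt) : R := coord x n.-1.

Definition enorm (x : pt) : R := Num.sqrt (\sum_i x 0 i ^+ 2).

Definition closed_half : set pt := [set x | 0 <= xn x].
Definition bdry_half : set pt := [set x | xn x = 0].
Definition closed_half_ball : set pt := [set x | enorm x <= 1 /\ 0 <= xn x].

Definition ebasis (i : 'I_n) : pt := delta_mx 0 i.
Definition elast : pt := \row_i ((val i == n.-1)%:R).

Definition partial (i : 'I_n) (f : pt -> R) : pt -> R :=
  fun x => 'D_(ebasis i) f x.

Definition C2 (f : pt -> R) : Prop :=
  (forall x, differentiable f x) /\
  (forall i x, differentiable (partial i f) x) /\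
  (forall i j, continuous (partial j (partial i f))).

Definition grad (f : pt -> R) (x : pt) : pt := \row_i partial i f x.
Definition hess (f : pt -> R) (x : pt) : 'M[R]_n :=
  \matrix_(i, j) partial j (partial i f) x.

Definition Aten (u : pt -> R) (x : pt) : 'M[R]_n :=
  let a := n%:R - 2 in
  (- (2 / a) * u x `^ (- (n%:R + 2) / a)) *: hess u x
  + (2 * n%:R / a ^+ 2 * u x `^ (- (2 * n%:R) / a)) *: ((grad u x)^T *m grad u x)
  - (2 / a ^+ 2 * u x `^ (- (2 * n%:R) / a) * \sum_i (grad u x 0 i) ^+ 2)
      *: (1%:M : 'M[R]_n).

Definition tang (u : pt -> R) (x : pt) : 'M[R]_n.-1 :=
  \matrix_(i, j) Aten u x (widen_ord (leq_pred n) i) (widen_ord (leq_pred n) j).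

Definition hmean (u : pt -> R) (x : pt) : R :=
  - (2 / (n%:R - 2)) * u x `^ (- n%:R / (n%:R - 2)) * 'D_elast u x.

Definition Bk (k : nat) (u : pt -> R) (x : pt) : R :=
  (n.-1)`!%:R / ((n - k)`!%:R * (dfo k)%:R) * hmean u x ^+ (2 * k - 1)
  + \sum_(1 <= s < k)
      ((n.-1 - s)`!%:R / ((n - k)`!%:R * (dfo (k - s))%:R)
       * msigma s (tang u x) * hmean u x ^+ (2 * k - 2 * s - 1)).

Definition ukl (u : pt -> R) (x : pt) (lam : R) (y : pt) : R :=
  (lam / enorm (y - x)) ^+ (n - 2)
  * u (x + (lam ^+ 2 / enorm (y - x) ^+ 2) *: (y - x)).

Definition lambar_set (u : pt -> R) (x : pt) : set R :=
  [set mu | 0 < mu /\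
    forall lam, 0 < lam < mu ->
      forall y, closed_half y -> lam <= enorm (y - x) -> ukl u x lam y <= u y].

Definition lambar (u : pt -> R) (x : pt) : \bar R :=
  ereal_sup [set mu%:E | mu in lambar_set u x].

End Defs.

(* Main.v *)
Require Import Defs.
From HB Require Import structures.
From mathcomp Require Import all_boot all_order all_algebra.
From mathcomp Require Import all_classical all_reals all_analysis.
From mathcomp Require Import lra.
Import Order.TTheory GRing.Theory Num.Theory.
Import numFieldNormedType.Exports.
Local Open Scope ring_scope.
Local Open Scope classical_set_scope.


Section H.
Variables (R : realType) (n : nat) (h : (n.-1 < n)%N).
Let i0 : 'I_n := Ordinal h.

Lemma xnE (x : 'rV[R]_n) : xn x = x 0 i0.
Proof.
rewrite /xn /Defs.coord (@insubT _ _ 'I_n _ h) /=.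
by congr (x 0 _); apply: val_inj.
Qed.

Lemma elastE i : (elast R n) 0 i = (i == i0)%:R.
Proof. by rewrite mxE. Qed.

Lemma enorm_ge0 (z : 'rV[R]_n) : 0 <= enorm z.
Proof. exact: sqrtr_ge0. Qed.

Lemma enormZ c (z : 'rV[R]_n) : enorm (c *: z) = `|c| * enorm z.
Proof.
rewrite /enorm; under eq_bigr do rewrite mxE exprMn.
by rewrite -mulr_sumr sqrtrM ?sqr_ge0 // sqrtr_sqr.
Qed.

Lemma enorm_elast : enorm (elast R n) = 1.
Proof.
rewrite /enorm (bigD1 i0) //= big1.
  by rewrite elastE eqxx addr0 expr1n sqrtr1.
by move=> i /negbTE hi; rewrite elastE hi expr0n.
Qed.

Lemma coord_le_enorm (z : 'rV[R]_n) i : `|z 0 i| <= enorm z.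
Proof.
rewrite -sqrtr_sqr /enorm ler_sqrt; last by apply: sumr_ge0 => j _; exact: sqr_ge0.
rewrite (bigD1 i) //= lerDl; apply: sumr_ge0 => j _; exact: sqr_ge0.
Qed.

Lemma norm_le_enorm (z : 'rV[R]_n) : `|z| <= enorm z.
Proof.
rewrite [leLHS]/Num.Def.normr/= mx_normrE.
apply: bigmax_le; first exact: enorm_ge0.
by move=> [i j] _ /=; rewrite (ord1 i); exact: coord_le_enorm.
Qed.

Lemma enorm_ge_last (x : 'rV[R]_n) t : x 0 i0 = 0 -> 0 <= t ->
  t <= enorm (x + t *: elast R n).
Proof.
move=> x0 t0; have -> : t = Num.sqrt (t ^+ 2) :> R by rewrite sqrtr_sqr ger0_norm.
rewrite /enorm ler_sqrt; last by apply: sumr_ge0 => j _; exact: sqr_ge0.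
rewrite sqrtr_sqr ger0_norm //.
rewrite (bigD1 i0) //= !mxE eqxx x0 add0r mulr1 lerDl.
apply: sumr_ge0 => j _; exact: sqr_ge0.
Qed.

Lemma cont_delta (f : 'rV[R]_n -> R) a eps : {for a, continuous f} -> 0 < eps ->
  exists2 d, 0 < d & forall z, `|a - z| < d -> `|f a - f z| < eps.
Proof.
move=> /cvgrPdist_lt fc e0; have := fc _ e0.
move=> /nbhs_normP [d d0 sub]; exists d => // z hz; exact: sub.
Qed.

End H.

Theorem lemma3p4 (R : realType) (n k : nat) (c0 : R) (u : 'rV[R]_n -> R) :
  (3 <= n)%N -> (1 <= k <= n)%N -> 0 < c0 ->
  C2 u ->
  (forall x, closed_half x -> 0 < u x) ->
  (forall x, closed_half x -> msigma k (Aten u x) = 2 ^+ k * 'C(n, k)%:R) ->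
  (forall x, closed_half x -> in_Gamma k (Aten u x)) ->
  (forall x, bdry_half x -> Bk k u x = c0) ->
  (exists v : 'rV[R]_n -> R, C2 v /\
     (forall x, closed_half_ball x -> 0 < v x) /\
     (forall x, closed_half_ball x -> x != 0 ->
        v x = enorm x `^ (2 - n%:R) * u ((enorm x ^+ 2)^-1 *: x))) ->
  forall x, bdry_half x -> (lambar u x < +oo)%E.
Proof.
move=> n3 _ _ [du _] upos _ _ _ [v [[dv _] [vpos vE]]] x bx.
have h : (n.-1 < n)%N by rewrite prednK // (leq_trans _ n3).
have x0 : x 0 (Ordinal h) = 0 by rewrite -(@xnE R n h); exact: bx.
have ux : 0 < u x by apply: upos; rewrite /closed_half /= bx.
have ux2 : 0 < u x / 2 by rewrite divr_gt0.
have [d1 d10 hd1] := @cont_delta R n _ _ _ (differentiable_continuous (du x)) ux2.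
have [d2 d20 hd2] := @cont_delta R n _ _ _ (differentiable_continuous (dv 0)) (@ltr01 R).
set M := Num.max 1 (2 * (`|v 0| + 1) / u x).
suff lb : (lambar u x <= M%:E)%E by apply: le_lt_trans lb (ltry _).
apply: ge_ereal_sup => _ [mu [mu0 Hmu] <-]; rewrite lee_fin leNgt; apply/negP => Mmu.
have M1 : 1 <= M by rewrite le_max lexx.
have MC : 2 * (`|v 0| + 1) / u x <= M by rewrite le_max lexx orbT.
set lam := (M + mu) / 2.
have lamM : M < lam by rewrite /lam; lra.
have lammu : lam < mu by rewrite /lam; lra.
have lam1 : 1 <= lam by lra.
have lam0 : 0 < lam by lra.
set a := lam ^+ 2 / d1. set b := 1 / d2.
have a0 : 0 <= a by rewrite divr_ge0 // ?exprn_ge0 // ltW.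
have b0 : 0 <= b by rewrite divr_ge0 // ltW.
have ha : d1 * a = lam ^+ 2 by rewrite /a mulrC divfK // gt_eqF.
have hb : d2 * b = 1 by rewrite /b mulrC divfK // gt_eqF.
set t := 1 + lam + a + b.
have t1 : 1 <= t by rewrite /t; lra.
have t0 : 0 < t by lra.
have lamt : lam <= t by rewrite /t; lra.
set e := elast R n.
set y := x + t *: e.
have hyx : y - x = t *: e by rewrite /y addrC addKr.
have nyx : enorm (y - x) = t by rewrite hyx enormZ (@enorm_elast R n h) mulr1 ger0_norm // ltW.
have yi0 : y 0 (Ordinal h) = t.
  by rewrite /y !mxE /= eqxx x0 add0r mulr1.
have hy : closed_half y by rewrite /closed_half /= (@xnE R n h) yi0 ltW.
have key := Hmu lam (_ : 0 < lam < mu) y hy (_ : lam <= enorm (y - x)).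
have {key} key : (lam / t) ^+ (n - 2) * u (x + (lam ^+ 2 / t) *: e) <= u y.
  have targ : lam ^+ 2 / t ^+ 2 * t = lam ^+ 2 / t.
    by rewrite expr2 invfM -!mulrA mulVf ?mulr1 // gt_eqF.
  by have := key; rewrite /ukl nyx hyx scalerA targ; apply; rewrite ?lam0 ?lammu ?nyx.
set z1 := x + (lam ^+ 2 / t) *: e.
have uz1 : u x / 2 < u z1.
  have hz : x - z1 = (- (lam ^+ 2 / t)) *: e by rewrite /z1 opprD addNKr scaleNr.
  have : `|x - z1| < d1.
    apply: le_lt_trans (@norm_le_enorm R n _) _.
    rewrite hz enormZ (@enorm_elast R n h) mulr1 normrN ger0_norm ?divr_ge0 ?exprn_ge0 ?(ltW t0) ?(ltW lam0) //.
    rewrite ltr_pdivrMr // /t !mulrDr ha; nra.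
  move/hd1; rewrite ltr_norml => /andP[_]; lra.
set N := enorm y.
have Nt : t <= N by apply: (@enorm_ge_last R n h) => //; exact: ltW.
have N0 : 0 < N by lra.
set w := (N ^+ 2)^-1 *: y.
have nw : enorm w = N^-1.
  rewrite enormZ ger0_norm ?invr_ge0 ?exprn_ge0 ?(ltW N0) //.
  by rewrite expr2 invfM -mulrA mulVf ?mulr1 // gt_eqF.
have hw : closed_half_ball w.
  split; first by rewrite nw invf_le1 //; lra.
  rewrite (@xnE R n h) mxE yi0; apply: mulr_ge0; last exact: ltW.
  by rewrite invr_ge0 exprn_ge0 // ltW.
have wn0 : w != 0.
  apply/eqP => w0; move: nw; rewrite w0 -(scale0r (0 : 'rV[R]_n)) enormZ normr0 mul0r.
  by move/eqP; rewrite eq_sym invr_eq0 gt_eqF.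
have vw := vE w hw wn0.
have {vw} vw : v w = N ^+ (n - 2) * u y.
  rewrite vw nw exprVn invrK /w scalerA mulfV ?scale1r ?expf_neq0 ?gt_eqF //.
  have -> : 2 - n%:R = - ((n - 2)%N%:R) :> R by rewrite natrB ?opprB // (leq_trans _ n3).
  by rewrite powRN powR_mulrn ?invr_ge0 ?(ltW N0) // exprVn invrK.
have hvw : v w < `|v 0| + 1.
  have : `|0 - w| < d2.
    rewrite sub0r normrN; apply: le_lt_trans (@norm_le_enorm R n _) _; rewrite nw.
    apply: (@le_lt_trans _ _ t^-1).
      by rewrite lef_pV2 ?posrE.
    by rewrite -[t^-1]mul1r ltr_pdivrMr // /t !mulrDr hb; nra.
  move/hd2; rewrite ltr_norml => /andP[h1 _].
  have := ler_norm (v 0); lra.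
have m0 : (0 < n - 2)%N by rewrite subn_gt0.
have h1 : lam * (u x / 2) <= lam ^+ (n - 2) * u z1.
  apply: ler_pM; rewrite ?(ltW lam0) ?(ltW ux2) ?(ltW uz1) //.
  exact: ler_eXnr.
have h2 : lam ^+ (n - 2) <= (N * (lam / t)) ^+ (n - 2).
  have l0 : 0 <= lam by exact: ltW.
  have tl : 0 <= lam / t by rewrite divr_ge0 // ltW.
  rewrite ler_pXn2r // ?nnegrE //; last by rewrite mulr_ge0 // ltW.
  rewrite mulrCA ler_peMr // ler_pdivlMr // mul1r //.
have h3 : (N * (lam / t)) ^+ (n - 2) * u z1 <= N ^+ (n - 2) * u y.
  rewrite exprMn -mulrA; apply: ler_wpM2l => //; exact: exprn_ge0 (ltW N0).
have h4 : lam * (u x / 2) < `|v 0| + 1.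
  apply: le_lt_trans (h1) _; apply: le_lt_trans hvw; rewrite vw.
  apply: le_trans (h3); apply: ler_wpM2r (h2); exact: ltW (lt_trans ux2 uz1).
have h5 : 2 * (`|v 0| + 1) < lam * u x.
  by rewrite -ltr_pdivrMr //; apply: le_lt_trans MC lamM.
have : lam * (u x / 2) = lam * u x / 2 by rewrite mulrA.
lra.
Qed.
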